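(* Let $\tau_0,\tau_1,\tau_2>0$, $\alpha>0$, and let $a\in\mathcal{B}_\alpha$. Then every root of the polynomial $p_a(z)=z^n+a_1z^{n-1}+\dots+a_n$ has modulus less than $\alpha$. Consequently the companion matrix $A=\mathrm{CC}(a)$ has spectral radius $\rho(A)<\alpha$.
   Context: $\mathcal{C}=\{z\in\mathbb{C}:\Re z\ge(1+\tau_0)|\Im z|\}\cap\{z\in\mathbb{C}:\tau_1<\Re z<\tau_2\}$, and $\mathcal{B}_\alpha=\{a\in\mathbb{R}^n:\ p_a(z)/z^n\in\mathcal{C}\text{ for all } z\in\mathbb{C} \text{ with } |z|=\alpha\}$. $\mathrm{CC}(a)$ is the $n\times n$ companion matrix with ones on the superdiagonal, zeros elsewhere in the first $n-1$ rows, and last row $[-a_n,\dots,-a_1]$; its characteristic polynomial is $p_a$. *)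

(* Defs.v *)
From HB Require Import structures.
From mathcomp Require Import all_boot all_order all_algebra.
From mathcomp Require Import classical_sets reals.
From mathcomp.real_closed Require Import complex.
Set Implicit Arguments. Unset Strict Implicit. Unset Printing Implicit Defensive.
Import Order.TTheory GRing.Theory Num.Theory.
Local Open Scope ring_scope.

Section Defs.
Variable R : realType.

Definition cmod (z : R[i]) : R := Normc.normc z.

Definition coneC (tau0 tau1 tau2 : R) (z : R[i]) : Prop :=
  (1 + tau0) * `|complex.Im z| <= complex.Re z /\
  tau1 < complex.Re z /\ complex.Re z < tau2.

(* a = (a_1,...,a_n) encoded as a : 'I_n -> R with a i = a_{i+1} *)
Definition p_a (n : nat) (a : 'I_n -> R) : {poly R} :=
  'X^n + \sum_(i < n) (a i)%:P * 'X^(n - i.+1).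

Definition p_aC (n : nat) (a : 'I_n -> R) : {poly R[i]} :=
  map_poly (fun x : R => x%:C%C) (p_a a).

Definition B_alpha (tau0 tau1 tau2 alpha : R) (n : nat) (a : 'I_n -> R) : Prop :=
  forall z : R[i], cmod z = alpha ->
    coneC tau0 tau1 tau2 ((p_aC a).[z] / z ^+ n).

(* companion matrix CC(a): ones on the superdiagonal in rows 0..n-2,
   last row [-a_n, ..., -a_1] *)
Definition CC (n : nat) (a : 'I_n -> R) : 'M[R]_n :=
  \matrix_(i < n, j < n)
    if (i.+1 < n)%N then (if j == i.+1 :> nat then 1 else 0)
    else - a (rev_ord j).

(* spectral radius: sup of moduli of the (complex) eigenvalues; 0 if none *)
Definition spectral_radius (n : nat) (A : 'M[R]_n) : R :=
  sup (fun r : R => exists lam : R[i],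
         eigenvalue (map_mx (fun x : R => x%:C%C) A) lam /\ r = cmod lam).
End Defs.

(* Main.v *)
Require Import Defs.
From HB Require Import structures.
From mathcomp Require Import all_boot all_order all_algebra.
From mathcomp Require Import cyclic separable reals.
From mathcomp Require cyclotomic.
From mathcomp Require Import boolp classical_sets.
From mathcomp.real_closed Require Import complex.
From mathcomp Require Import ring lra zify.
From Stdlib Require Import Lia.
Import Order.TTheory GRing.Theory Num.Theory ComplexField.
Local Open Scope complex_scope.
Local Open Scope ring_scope.

Lemma prim_exists (F : closedFieldType) n : (n > 0)%N -> (n%:R : F) != 0 -> exists z : F, n.-primitive_root z.
Proof.
move=> n_gt0 nz.
pose p : {poly F} := 'X^n - 1; have [r Dp] := closed_field_poly_normal p.
rewrite (monicP _) ?monicXnsubC // scale1r in Dp.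
have rn1: all n.-unity_root r by apply/allP=> z; rewrite -root_prod_XsubC -Dp.
have sz_r: (n < (size r).+1)%N.
  by rewrite -(size_prod_XsubC r id) -Dp size_XnsubC.
have [|z] := hasP (has_prim_root n_gt0 rn1 _ sz_r); last by exists z.
by rewrite -separable_prod_XsubC -Dp cyclotomic.separable_Xn_sub_1.
Qed.

Section Key.
Variable C : numClosedFieldType.

Lemma geo_sum N (xi : C) e : N.-primitive_root xi -> (0 < e < N + N)%N ->
  \sum_(k < N) (xi ^+ e) ^+ k = ((e == N)%:R * N%:R).
Proof.
move=> Hxi /andP[e0 e2].
have xN : xi ^+ N = 1 := prim_expr_order Hxi.
have [->|neN] := eqVneq e N.
  by rewrite xN mul1r (eq_bigr (fun _ => 1)) ?sumr_const ?card_ord // => k _; rewrite expr1n.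
rewrite mul0r.
have ne1 : xi ^+ e != 1.
  rewrite -(prim_order_dvd Hxi); apply/negP => /dvdnP [q Hq].
  move: e0 e2 neN; rewrite Hq; case: q {Hq} => [|[|q]] //=; first by rewrite mul1n eqxx.
  by rewrite !mulSn; lia.
have : (xi ^+ e - 1) * \sum_(k < N) (xi ^+ e) ^+ k = 0.
  by rewrite -subrX1 exprAC xN expr1n subrr.
by move/eqP; rewrite mulf_eq0 subr_eq0 (negPf ne1) /= => /eqP.
Qed.

Variables (al tau : C) (n : nat) (z0 : C) (Q : {poly C}).
Hypotheses (al_gt0 : 0 < al) (tau_gt0 : 0 < tau) (szQ : (size Q <= n)%N)
  (z0_big : al < `|z0|)
  (hyp : forall z, `|z| = al -> tau <= 'Re (Q.[z] * (z - z0) / z ^+ n)).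

Definition rho := al^-1.
Definition cc (i : nat) := Q`_(n.-1 - i).
Definition vv := z0^* * rho ^+ 2.
Definition LL := (1 + `|z0| * rho) ^+ 2.
Definition KK := \sum_(i < n) `|cc i| * `|vv| ^+ i.

Lemma rho_gt0 : 0 < rho. Proof. by rewrite invr_gt0. Qed.

Lemma z0rho : 1 < `|z0| * rho.
Proof. by rewrite /rho ltr_pdivlMr // mul1r. Qed.

Lemma nvv : `|vv| = `|z0| * rho ^+ 2.
Proof. by rewrite /vv normrM norm_conjC normrX gtr0_norm // rho_gt0. Qed.

Lemma rho_vv : rho < `|vv|.
Proof.
rewrite nvv expr2 mulrA -[X in X < _]mul1r ltr_pM2r ?rho_gt0 //; exact: z0rho.
Qed.

Lemma I1 (W : C) : W != 0 ->
  Q.[W^-1] * (W^-1 - z0) / W^-1 ^+ n = (1 - z0 * W) * \sum_(i < n) cc i * W ^+ i.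
Proof.
move=> W0; rewrite (horner_coef_wide _ szQ) [in RHS](reindex_inj rev_ord_inj) /= !mulr_suml mulr_sumr.
apply: eq_bigr => j _.
have ->: cc (n - j.+1) = Q`_j by rewrite /cc; congr nth; have := ltn_ord j; lia.
have -> : W^-1 ^+ n = W^-1 ^+ (n - j.+1 + j).+1 by congr (_ ^+ _); have := ltn_ord j; lia.
rewrite exprS exprD !exprVn; field.
by rewrite W0 expf_neq0 ?expf_neq0.
Qed.

Section Nfixed.
Variables (N : nat) (xi : C).
Hypotheses (N_gt0 : (0 < N)%N) (nN : (n <= N)%N) (Hxi : N.-primitive_root xi).

Let w (k : nat) := rho * xi ^+ k.

Lemma nxi : `|xi| = 1.
Proof.
have := prim_expr_order Hxi => /(congr1 (fun x : C => `|x|)); rewrite normrX normr1 => /eqP.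
by rewrite pexpr_eq1 // => /eqP.
Qed.

Lemma nw k : `|w k| = rho.
Proof. by rewrite /w normrM normrX nxi expr1n mulr1 gtr0_norm // rho_gt0. Qed.

Lemma w_neq0 k : w k != 0.
Proof. by rewrite -normr_eq0 nw gt_eqF // rho_gt0. Qed.

Lemma wN k : w k ^+ N = rho ^+ N.
Proof. by rewrite /w exprMn exprAC (prim_expr_order Hxi) expr1n mulr1. Qed.

Let f k := Q.[(w k)^-1] * ((w k)^-1 - z0) / (w k)^-1 ^+ n.
Let h k := \sum_(i < n) cc i * w k ^+ i.
Let D k := `|1 - z0 * w k| ^+ 2.
Let S k := \sum_(m < N) w k ^+ (N.-1 - m) * vv ^+ m.

Lemma D_gt0 k : 0 < D k.
Proof.
rewrite /D exprn_gt0 // normr_gt0 subr_eq0; apply/negP => /eqP H.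
have := z0rho; rewrite -(nw k) -normrM -H normr1 ltxx //.
Qed.

Lemma D_le k : D k <= LL.
Proof.
rewrite /D /LL; apply: lerXn2r; rewrite ?nnegrE //.
  by rewrite addr_ge0 // mulr_ge0 // ltW // rho_gt0.
by apply: le_trans (ler_normB _ _) _; rewrite normr1 normrM nw.
Qed.

Lemma I2 k : D k * (h k * w k) = f k * (w k - vv).
Proof.
rewrite /f I1 ?w_neq0 // -/(h k) /D normCK rmorphB rmorph1 rmorphM /vv.
have ww : rho ^+ 2 = w k * (w k)^* by rewrite -normCK nw.
rewrite ww; ring.
Qed.

Lemma I3 k : (w k - vv) * S k = rho ^+ N - vv ^+ N.
Proof. by rewrite /S -subrXX wN. Qed.

Lemma dN : rho ^+ N - vv ^+ N != 0.
Proof.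
rewrite subr_eq0; apply/negP => /eqP H.
have : rho ^+ N < `|vv| ^+ N by rewrite ltrXn2r ?rho_vv ?ltW ?rho_gt0 // -lt0n.
by rewrite -normrX -H normrX gtr0_norm ?rho_gt0 // ltxx.
Qed.

Lemma I5 k : f k / D k = h k * w k * S k / (rho ^+ N - vv ^+ N).
Proof.
have D0 : D k != 0 by rewrite gt_eqF // D_gt0.
rewrite -(I3 k); apply/eqP; rewrite eqr_div //; last by rewrite (I3 k) dN.
by apply/eqP; rewrite mulrA -I2; ring.
Qed.

Lemma I4 : \sum_(k < N) h k * w k * S k = N%:R * rho ^+ N * \sum_(i < n) cc i * vv ^+ i.
Proof.
have E k : h k * w k * S k = \sum_(i < n) \sum_(m < N)
    (cc i * vv ^+ m * rho ^+ (N + i - m)) * (xi ^+ (N + i - m)) ^+ k.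
  rewrite /h /S !mulr_suml; apply: eq_bigr => i _; rewrite mulr_sumr; apply: eq_bigr => m _.
  have -> : (N + i - m = i + 1 + (N.-1 - m))%N by have := ltn_ord m; lia.
  rewrite -exprM [(_ * k)%N]mulnC exprM.
  rewrite -[in RHS]mulrA -[in RHS]exprMn.
  change (rho * xi ^+ k) with (w k).
  rewrite !exprD expr1; ring.
rewrite (eq_bigr _ (fun (k : 'I_N) _ => E k)) exchange_big /= mulr_sumr.
apply: eq_bigr => i _; rewrite exchange_big /=.
rewrite (eq_bigr (fun m : 'I_N => (cc i * vv ^+ m * rho ^+ (N + i - m)%N) *
    ((((N + i - m)%N == N))%:R * N%:R))); last first.
  move=> m _; rewrite -mulr_sumr geo_sum //; have := ltn_ord m; have := ltn_ord i; lia.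
have iN : (i < N)%N by apply: leq_trans (ltn_ord i) nN.
rewrite (bigD1 (Ordinal iN)) //= big1 ?addr0.
  by rewrite addnK eqxx mul1r; ring.
move=> m /eqP hm; have -> : ((N + i - m)%N == N) = false.
  apply/negP => /eqP h1; apply: hm; apply: val_inj => /=; have := ltn_ord m; lia.
by rewrite mul0r mulr0.
Qed.

Lemma LL_gt0 : 0 < LL.
Proof. by rewrite /LL exprn_gt0 // ltr_wpDr // mulr_ge0 // ltW // rho_gt0. Qed.

Lemma gap_gt0 : 0 < `|vv| ^+ N - rho ^+ N.
Proof. by rewrite subr_gt0 ltrXn2r ?rho_vv ?ltW ?rho_gt0 // -lt0n. Qed.

Lemma est : N%:R * (tau / LL) <= N%:R * rho ^+ N * KK / (`|vv| ^+ N - rho ^+ N).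
Proof.
pose T := \sum_(k < N) f k / D k.
have hf k : tau <= 'Re (f k).
  by apply: hyp; rewrite normfV nw /rho invrK.
have lo : N%:R * (tau / LL) <= 'Re T.
  have -> : N%:R * (tau / LL) = \sum_(k < N) tau / LL.
    by rewrite sumr_const card_ord mulr_natl.
  rewrite /T raddf_sum; apply: ler_sum => k _.
  rewrite /= ReMr; last by rewrite realV gtr0_real // D_gt0.
  apply: (@le_trans _ _ (tau / D k)).
    rewrite ler_pM2l // lef_pV2 ?posrE ?D_gt0 ?LL_gt0 //; exact: D_le.
  by rewrite ler_pM2r ?invr_gt0 ?D_gt0.
have up : 'Re T <= N%:R * rho ^+ N * KK / (`|vv| ^+ N - rho ^+ N).
  apply: le_trans (leif_Re_Creal T).1 _.
  rewrite /T (eq_bigr _ (fun (k : 'I_N) _ => I5 k)) -mulr_suml I4.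
  rewrite normrM normfV normrM normrM normr_nat normrX gtr0_norm ?rho_gt0 //.
  apply: ler_pM.
  - by rewrite mulr_ge0 // mulr_ge0 // exprn_ge0 // ltW // rho_gt0.
  - by rewrite invr_ge0.
  - apply: ler_wpM2l; first by rewrite mulr_ge0 ?ler0n ?exprn_ge0 ?ltW ?rho_gt0.
    apply: le_trans (ler_norm_sum _ _ _) _; apply: ler_sum => i _.
    by rewrite normrM normrX.
  - rewrite lef_pV2 ?posrE ?gap_gt0 ?normr_gt0 ?dN //.
    by rewrite distrC -[X in X - _]normrX -[X in _ - X](gtr0_norm (exprn_gt0 N rho_gt0)) lerB_dist.
by apply: le_trans lo up.
Qed.

End Nfixed.
Definition bb := `|vv| / rho.

Lemma bb_gt1 : 1 < bb.
Proof. by rewrite /bb ltr_pdivlMr ?rho_gt0 // mul1r rho_vv. Qed.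

Lemma key_ineq N : (0 < N)%N -> (n <= N)%N -> tau * (bb ^+ N - 1) <= LL * KK.
Proof.
move=> N0 nN.
have nz : (N%:R : C) != 0 by rewrite pnatr_eq0 -lt0n.
have [xi Hxi] := @prim_exists C N N0 nz.
have H := @est N xi N0 nN Hxi.
rewrite -!mulrA ler_pM2l ?ltr0n // mulrA ler_pdivlMr ?gap_gt0 // in H.
have E : `|vv| ^+ N - rho ^+ N = rho ^+ N * (bb ^+ N - 1).
  by rewrite /bb mulrBr mulr1 -exprMn mulrCA divff ?mulr1 // gt_eqF // rho_gt0.
rewrite E in H.
have H1 : tau / LL * (bb ^+ N - 1) <= KK.
  by rewrite -(ler_pM2l (exprn_gt0 N rho_gt0)); move: H; rewrite mulrCA.
have -> : tau * (bb ^+ N - 1) = tau / LL * (bb ^+ N - 1) * LL.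
  by rewrite mulrAC divfK // gt_eqF // LL_gt0.
by rewrite [LL * KK]mulrC ler_pM2r ?LL_gt0.
Qed.
End Key.

Lemma bern (R : realFieldType) (x : R) N : 0 <= x -> 1 + N%:R * x <= (1 + x) ^+ N.
Proof.
move=> x0; elim: N => [|N IH]; first by rewrite mul0r addr0 expr0.
rewrite exprS -natr1.
have N0 : 0 <= N%:R :> R by rewrite ler0n.
have P : 0 <= N%:R * x * x by rewrite !mulr_ge0.
nra.
Qed.

Lemma ReC (R : rcfType) (x : R[i]) : 'Re x = (complex.Re x)%:C.
Proof. by rewrite ReE ReJ_add. Qed.


Lemma key_R (R : realType) (al tau : R) (n : nat) (z0 : R[i]) (Q : {poly R[i]}) :
  0 < al -> 0 < tau -> (size Q <= n)%N ->
  (forall z : R[i], Normc.normc z = al -> tau < complex.Re (Q.[z] * (z - z0) / z ^+ n)) ->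
  Normc.normc z0 < al.
Proof.
move=> al0 tau0 szQ H.
rewrite ltNge; apply/negP => hge.
have [e|ne] := eqVneq (Normc.normc z0) al.
  by have := H z0 e; rewrite subrr mulr0 mul0r /= => /(lt_trans tau0); rewrite ltxx.
have big : al < Normc.normc z0 by rewrite lt_neqAle eq_sym ne hge.
have al0C : 0 < al%:C by rewrite ltcR.
have tau0C : 0 < tau%:C by rewrite ltcR.
have bigC : al%:C < `|z0| by rewrite ltcR.
have hypC : forall z : R[i], `|z| = al%:C -> tau%:C <= 'Re (Q.[z] * (z - z0) / z ^+ n).
  move=> z hz; have hz' : Normc.normc z = al by case: hz.
  by rewrite ReC lecR; apply: ltW; apply: H.
have KI := @key_ineq _ _ _ _ _ _ al0C tau0C szQ bigC hypC.
have b1 := @bb_gt1 _ _ _ al0C bigC.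
set b := bb _ _ _ in KI b1.
set l := LL _ _ _ in KI.
set k := KK _ _ _ _ _ in KI.
have rb : b \is Num.real by apply: gtr0_real; apply: lt_trans b1.
have rl : l \is Num.real by apply: gtr0_real; apply: LL_gt0.
have rk : k \is Num.real by apply: ger0_real; apply: sumr_ge0 => i _; rewrite mulr_ge0 ?exprn_ge0.
rewrite -(RRe_real rb) -(RRe_real rl) -(RRe_real rk) in KI b1.
move: (complex.Re b) (complex.Re l) (complex.Re k) KI b1 => B L K KI b1.
rewrite ltcR in b1.
have KIR N : (0 < N)%N -> (n <= N)%N -> tau * (B ^+ N - 1) <= L * K.
  move=> N0 nN; have := KI N N0 nN.
  have e1 : (tau * (B ^+ N - 1))%:C = tau%:C * (B%:C ^+ N - 1).
    by rewrite rmorphM rmorphB rmorphXn rmorph1.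
  have e2 : (L * K)%:C = L%:C * K%:C by rewrite rmorphM.
  by rewrite -e1 -e2 lecR.
pose M := `|L * K| / (tau * (B - 1)).
have M0 : 0 <= M by rewrite divr_ge0 // mulr_ge0 // ltW // subr_gt0.
have HM := archi_boundP M0.
set A := Num.Def.archi_bound M in HM.
have h1 := KIR (A + n).+1 isT (leq_trans (leq_addl A n) (leqnSn _)).
have B1 : 0 <= B - 1 by rewrite subr_ge0 ltW.
have h2 := @bern _ _ (A + n).+1 B1.
rewrite [1 + (B - 1)]addrC subrK in h2.
set Nr := ((A + n).+1)%:R in h1 h2.
have hA : (A%:R : R) <= Nr by rewrite /Nr ler_nat; apply: leq_trans (leq_addr n A) (leqnSn _).
have eM : M * (tau * (B - 1)) = `|L * K|.
  by rewrite /M divfK // mulf_neq0 ?gt_eqF // subr_gt0.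
have lk := ler_norm (L * K).
have tb : 0 < tau * (B - 1) by rewrite mulr_gt0 // subr_gt0.
have : M * (tau * (B - 1)) < Nr * (tau * (B - 1)).
  by rewrite ltr_pM2r //; apply: lt_le_trans HM hA.
have : tau * (1 + Nr * (B - 1)) <= tau * B ^+ (A + n).+1.
  by rewrite ler_pM2l.
move=> x2 x1.
rewrite mulrBr mulr1 in h1.
have e : tau * (1 + Nr * (B - 1)) - tau = Nr * (tau * (B - 1)) by ring.
have c : Nr * (tau * (B - 1)) <= L * K.
  by rewrite -e; apply: le_trans h1; rewrite lerD2r.
have := le_trans c lk; rewrite -eM => c2.
by have := lt_le_trans x1 c2; rewrite ltxx.
Qed.


Section PA.
Variables (R : realType) (n : nat) (a : 'I_n -> R).

Lemma size_sum_pa : (size (\sum_(i < n) (a i)%:P * 'X^(n - i.+1))%R <= n)%N.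
Proof.
apply: leq_trans (size_sum _ _ _) _; apply/bigmax_leqP => i _.
apply: leq_trans (size_mul_leq _ _) _; rewrite size_polyXn.
have := size_polyC_leq1 (a i); have := ltn_ord i; case: (size _) => [|[|//]] /=; lia.
Qed.

Lemma size_pa : size (p_a a) = n.+1.
Proof. by rewrite /p_a size_polyDl size_polyXn // ltnS size_sum_pa. Qed.

Lemma monic_pa : p_a a \is monic.
Proof.
by rewrite monicE /p_a lead_coefDl ?lead_coefXn // size_polyXn ltnS size_sum_pa.
Qed.

Lemma coef_pa (j : 'I_n) : (p_a a)`_j = a (rev_ord j).
Proof.
rewrite /p_a coefD coefXn ltn_eqF // add0r coef_sum.
rewrite (bigD1 (rev_ord j)) //= coefCM coefXn big1 ?addr0.
  by rewrite subnS subKn ?eqxx ?mulr1 //; have := ltn_ord j; lia.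
move=> i hi; rewrite coefCM coefXn.
have -> : ((j : nat) == (n - i.+1)%N) = false.
  apply/negP => /eqP hj; move/eqP: hi; apply; apply: val_inj => /=.
  have := ltn_ord i; lia.
by rewrite mulr0.
Qed.
End PA.

Lemma castmx_companion (F : nzRingType) (p : {poly F}) m (e : (size p).-1 = m) (i j : 'I_m) :
  castmx (e, e) (companionmx p) i j =
  if (i == m.-1 :> nat) then - p`_j else (i.+1 == j :> nat)%:R.
Proof. by case: m / e i j => i j; rewrite castmx_id mxE. Qed.

Lemma char_poly_cast (F : comNzRingType) m k (e : m = k) (A : 'M[F]_m) :
  char_poly (castmx (e, e) A) = char_poly A.
Proof. by case: k / e; rewrite castmx_id. Qed.

Lemma char_poly_CC (R : realType) n (a : 'I_n -> R) : char_poly (CC a) = p_a a.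
Proof.
have e : (size (p_a a)).-1 = n by rewrite size_pa.
have -> : CC a = castmx (e, e) (companionmx (p_a a)).
  apply/matrixP => i j; rewrite castmx_companion /CC mxE.
  have -> : (i.+1 < n)%N = ~~ (i == n.-1 :> nat).
    by apply/idP/idP; have := ltn_ord i; lia.
  case: ((i : nat) == n.-1) => /=; first by rewrite coef_pa.
  by rewrite eq_sym; case: (_ == _).
by rewrite char_poly_cast companionmxK // monic_pa.
Qed.

Lemma seq_bound (R : realType) (al : R) (s : seq R[i]) : 0 < al ->
  (forall r, r \in s -> cmod r < al) -> exists M, M < al /\ forall r, r \in s -> cmod r <= M.
Proof.
move=> al0; elim: s => [|r s IH] H.
  by exists 0; split => // r; rewrite in_nil.
have [M [HM1 HM2]] : exists M, M < al /\ forall r, r \in s -> cmod r <= M.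
  by apply: IH => x xs; apply: H; rewrite inE xs orbT.
have Hr : cmod r < al by apply: H; rewrite inE eqxx.
have [h|h] := leP (cmod r) M.
  exists M; split => // x; rewrite inE => /orP [/eqP -> //|]; exact: HM2.
exists (cmod r); split => // x; rewrite inE => /orP [/eqP -> //|xs].
by apply: le_trans (HM2 x xs) (ltW h).
Qed.

Theorem lemma4p2 (R : realType) (tau0 tau1 tau2 alpha : R) (n : nat)
  (a : 'I_n -> R) :
  0 < tau0 -> 0 < tau1 -> 0 < tau2 -> 0 < alpha ->
  B_alpha tau0 tau1 tau2 alpha a ->
  (forall z : R[i], root (p_aC a) z -> cmod z < alpha) /\
  spectral_radius (CC a) < alpha.
Proof.
move=> t0 t1 t2 al0 HB.
have szP : size (p_aC a) = n.+1.
  by rewrite /p_aC size_map_inj_poly ?size_pa //; exact: complexI.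
have roots : forall z : R[i], root (p_aC a) z -> cmod z < alpha.
  move=> z0 /factor_theorem [Q hQ].
  have Q0 : Q != 0 by apply/eqP => Q0; move: szP; rewrite hQ Q0 mul0r size_poly0.
  have szQ : (size Q <= n)%N.
    by move: szP; rewrite hQ size_Mmonic ?monicXsubC // size_XsubC addn2 /= => [[->]].
  rewrite /cmod; apply: (@key_R _ _ _ _ _ _ al0 t1 szQ) => z hz.
  case: (HB z hz) => _ [h _].
  by move: h; rewrite hQ hornerM hornerXsubC.
split => //.
have P0 : p_aC a != 0 by rewrite -size_poly_eq0 szP.
have [rs Hrs] := closed_field_poly_normal (p_aC a).
have inrs lam : root (p_aC a) lam -> lam \in rs.
  by rewrite Hrs rootZ ?lead_coef_eq0 // root_prod_XsubC.
have rsroot r : r \in rs -> root (p_aC a) r.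
  by rewrite Hrs rootZ ?lead_coef_eq0 // root_prod_XsubC.
have [M [HM1 HM2]] := @seq_bound _ _ rs al0 (fun r rr => roots r (rsroot r rr)).
have eig_root lam : eigenvalue (map_mx (fun x : R => x%:C) (CC a)) lam -> root (p_aC a) lam.
  rewrite eigenvalue_root_char.
  have <- : map_poly (real_complex R) (char_poly (CC a)) = char_poly (map_mx (fun x : R => x%:C) (CC a)).
    exact: (map_char_poly (real_complex R) (CC a)).
  by rewrite char_poly_CC.
rewrite /spectral_radius.
set S := (fun r : R => _).
have [ne|ne] := pselect (exists x, S x).
  apply: le_lt_trans HM1; apply: ge_sup => //.
  by move=> y [lam [Hl ->]]; apply: HM2; apply: inrs; apply: eig_root.
have -> : S = set0.
  by apply/funext => x; apply/propext; split => // Sx; apply: ne; exists x.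
by rewrite sup0.
Qed.
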